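(* Assume condition $( * )$ with $n_0=1$ and let $\lambda\in(0,1]$. There exists $K>0$ such that for all $f\in\mathcal L_1$ and $t\in\mathbb R$, $\|Q(t)f-Qf\|_3\le K|t|\,\|f\|_1$.
   Context: Setting: $(E,d)$ non-compact metric space with compact closed balls, $x_0\in E$; $G$ a semigroup of Lipschitz maps of $E$ acting measurably; $c(g)=\sup_{x\ne y}d(gx,gy)/d(x,y)$, $\Gamma(g)=1+c(g)+d(gx_0,x_0)$; $\pi$ a probability on $G$, $Qf(x)=\int_G f(gx)\,d\pi(g)$. Condition $( * )$ with $n_0=1$: $\int_G\Gamma^3(1+c^{1/2})\,d\pi<\infty$ and $\int_G c^{1/2}\max\{c,1\}^3\,d\pi<1$. $\xi:E\to\mathbb R$ is Lipschitz: $|\xi(x)-\xi(y)|\le Cd(x,y)$. $Q(t)f(x)=\int_G e^{it\xi(gx)}f(gx)\,d\pi(g)$. For $\lambda\in(0,1]$, $p_\lambda(x)=1+\lambda d(x,x_0)^{1/2}$. For $\gamma>0$, $\mathcal L_\gamma$ is the Banach space of $f:E\to\mathbb C$ with $m_\gamma(f)=\sup_{x\ne y}\frac{|f(x)-f(y)|}{d(x,y)^{1/2}p_\lambda(x)^\gamma p_\lambda(y)^\gamma}<\infty$, with norm $\|f\|_\gamma=m_\gamma(f)+|f|_\gamma$, $|f|_\gamma=\sup_x|f(x)|/p_\lambda(x)^{\gamma+1}$. *)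

(* Defs.v *)
From HB Require Import structures.
From mathcomp Require Import all_boot all_order all_algebra.
From mathcomp Require Import all_classical all_reals all_analysis.
From mathcomp Require Import complex.
Set Implicit Arguments. Unset Strict Implicit. Unset Printing Implicit Defensive.
Import Order.TTheory GRing.Theory Num.Theory.
Local Open Scope classical_set_scope.
Local Open Scope ring_scope.

Section Defs.
Context {R : realType} {E : pointedType}.
Variable d : E -> E -> R.

Definition is_metric : Prop :=
  [/\ (forall x y, 0 <= d x y),
      (forall x y, d x y = 0 <-> x = y),
      (forall x y, d x y = d y x) &
      (forall x y z, d x z <= d x y + d y z)].

Definition dopen (A : set E) : Prop :=
  forall x, A x -> exists e : R, 0 < e /\ [set y | d x y < e] `<=` A.

Definition dcompact (K : set E) : Prop :=
  forall (I : Type) (U : I -> set E), (forall i, dopen (U i)) ->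
    K `<=` \bigcup_i U i ->
    exists F : set I, finite_set F /\ K `<=` \bigcup_(i in F) U i.

Definition closed_ball (x : E) (r : R) : set E := [set y | d x y <= r].

Definition compact_closed_balls : Prop :=
  forall x r, dcompact (closed_ball x r).

Definition dlipschitz (h : E -> E) : Prop :=
  exists C : R, forall x y, d (h x) (h y) <= C * d x y.

Definition lipc (h : E -> E) : R :=
  sup [set r | exists x y, x <> y /\ r = d (h x) (h y) / d x y].

Definition plam (x0 : E) (lam : R) (x : E) : R := 1 + lam * Num.sqrt (d x x0).

Definition cmod (z : R[i]) : R := Normc.normc z.

Definition mgam (x0 : E) (lam gam : R) (f : E -> R[i]) : \bar R :=
  ereal_sup [set r | exists x y, x <> y /\ r = ((cmod (f x - f y)) /
      (Num.sqrt (d x y) * (plam x0 lam x `^ gam) * (plam x0 lam y `^ gam)))%:E].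

Definition absgam (x0 : E) (lam gam : R) (f : E -> R[i]) : \bar R :=
  ereal_sup [set (cmod (f x) / plam x0 lam x `^ (gam + 1))%:E | x in [set: E]].

Definition normL (x0 : E) (lam gam : R) (f : E -> R[i]) : \bar R :=
  (mgam x0 lam gam f + absgam x0 lam gam f)%E.

Definition inL (x0 : E) (lam gam : R) (f : E -> R[i]) : Prop :=
  (normL x0 lam gam f < +oo)%E.

End Defs.

Notation borelE d := (g_sigma_algebraType (dopen d)).

Section Ops.
Context {R : realType} {E : pointedType} {dG : measure_display}
  {G : measurableType dG}.
Variables (d : E -> E -> R) (act : G -> E -> E) (P : probability G R).

Definition Gam (x0 : E) (g : G) : R := 1 + lipc d (act g) + d (act g x0) x0.

Definition Cint (h : G -> R[i]) : R[i] :=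
  Complex (\int[P]_g (complex.Re (h g))) (\int[P]_g (complex.Im (h g))).

Definition expi (u : R) : R[i] := Complex (cos u) (sin u).

Definition Qop (f : E -> R[i]) : E -> R[i] :=
  fun x => Cint (fun g => f (act g x)).

Definition Qt (xi : E -> R) (t : R) (f : E -> R[i]) : E -> R[i] :=
  fun x => Cint (fun g => (expi (t * xi (act g x)) * f (act g x))%R).

End Ops.

(* Main.v *)
Require Import Defs.
From HB Require Import structures.
From mathcomp Require Import all_boot all_order all_algebra.
From mathcomp Require Import all_classical all_reals all_analysis.
From mathcomp Require Import complex.
From mathcomp Require Import ring lra.
Import Order.TTheory GRing.Theory Num.Theory.
Import numFieldTopology.Exports numFieldNormedType.Exports.
Local Open Scope classical_set_scope.
Local Open Scope ring_scope.

Section AuxC.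
Context {R : realType}.
Implicit Types a b : R.

Lemma cmod_ge0 (z : R[i]) : 0 <= cmod z.
Proof. by case: z => a b; rewrite /cmod /= sqrtr_ge0. Qed.

Lemma cmod_Re (z : R[i]) : `|complex.Re z| <= cmod z.
Proof.
case: z => a b; rewrite /cmod /= -sqrtr_sqr ler_wsqrtr //.
by rewrite lerDl sqr_ge0.
Qed.

Lemma cmod_Im (z : R[i]) : `|complex.Im z| <= cmod z.
Proof.
case: z => a b; rewrite /cmod /= -sqrtr_sqr ler_wsqrtr //.
by rewrite lerDr sqr_ge0.
Qed.

Lemma cmod_Complex a b : cmod (Complex a b) <= `|a| + `|b|.
Proof.
rewrite /cmod /= -[X in _ <= X]ger0_norm ?addr_ge0 // -sqrtr_sqr ler_wsqrtr //.
rewrite sqrrD !real_normK ?num_real // lerD2r lerDl.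
by apply: mulrn_wge0; apply: mulr_ge0.
Qed.

Lemma cmodD (z w : R[i]) : cmod (z + w) <= cmod z + cmod w.
Proof. exact: le_normcD. Qed.

Lemma cmodN (z : R[i]) : cmod (- z) = cmod z.
Proof. exact: normcN. Qed.

Lemma cmodB (z w : R[i]) : cmod (z - w) <= cmod z + cmod w.
Proof. by rewrite -(cmodN w) cmodD. Qed.

Lemma cmodM (z w : R[i]) : cmod (z * w) = cmod z * cmod w.
Proof. exact: Normc.normcM. Qed.

Lemma cmod_expi a : cmod (expi a) = 1.
Proof. by rewrite /cmod /expi /= cos2Dsin2 sqrtr1. Qed.

Lemma sin_lip a b : `|sin a - sin b| <= `|a - b|.
Proof.
wlog ab : a b / a <= b.
  move=> H; have [/H//|/ltW /H] := leP a b.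
  by rewrite -normrN opprB -[`|a - b|]normrN opprB.
rewrite -normrN opprB -[`|a - b|]normrN opprB.
have [|c _ ->] := @MVT_segment _ sin cos _ _ ab.
  exact/continuous_subspaceT/continuous_sin.
by rewrite normrM ler_piMl // cos_max.
Qed.

Lemma cos_lip a b : `|cos a - cos b| <= `|a - b|.
Proof.
wlog ab : a b / a <= b.
  move=> H; have [/H//|/ltW /H] := leP a b.
  by rewrite -normrN opprB -[`|a - b|]normrN opprB.
rewrite -normrN opprB -[`|a - b|]normrN opprB.
have [|c _ ->] := @MVT_segment _ cos (- sin) _ _ ab.
  exact/continuous_subspaceT/continuous_cos.
by rewrite normrM normrN ler_piMl // sin_max.
Qed.

Lemma cmod_expiB a b : cmod (expi a - expi b) <= 2 * `|a - b|.
Proof.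
rewrite /expi; apply: (le_trans (cmod_Complex _ _)).
by rewrite mulr2n mulrDl mul1r lerD // ?cos_lip ?sin_lip.
Qed.

Lemma sqrtD_le a b : 0 <= a -> 0 <= b ->
  Num.sqrt (a + b) <= Num.sqrt a + Num.sqrt b.
Proof.
move=> a0 b0; rewrite -[X in _ <= X]ger0_norm ?addr_ge0 ?sqrtr_ge0 //.
rewrite -sqrtr_sqr ler_wsqrtr // sqrrD !sqr_sqrtr // lerD2r lerDl.
by apply: mulrn_wge0; apply: mulr_ge0; apply: sqrtr_ge0.
Qed.

End AuxC.

Section AuxM.
Context d (T : measurableType d) (R : realType).
Variable mu : {measure set T -> \bar R}.

Lemma int_mono (f1 f2 : T -> \bar R) : (forall x, (0 <= f1 x)%E) ->
  (forall x, (f1 x <= f2 x)%E) ->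
  (\int[mu]_x f1 x <= \int[mu]_x f2 x)%E.
Proof.
move=> f10 f12.
have f20 x : (0 <= f2 x)%E by apply: le_trans (f10 x) (f12 x).
rewrite !ge0_integralTE //; apply: ereal_sup_le => _ [h hf <-].
by exists h => // x; apply: le_trans (hf x) (f12 x).
Qed.

Variables (H : T -> R) (I : R).
Hypothesis H0 : forall g, 0 <= H g.
Hypothesis HI : (\int[mu]_x (H x)%:E = I%:E)%E.

Lemma I_ge0 : 0 <= I.
Proof. by rewrite -lee_fin -HI integral_ge0 // => x _; rewrite lee_fin. Qed.

Lemma bnd_key (F : T -> R) k : measurable_fun setT F -> 0 < k ->
  (forall g, `|F g| <= k * H g) ->
  (\int[mu]_x (`|F x|)%:E <= (k * I)%:E)%E.
Proof.
move=> mF k0 Fk.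
have mF' : measurable_fun setT (fun x => `|F x| / k).
  apply: measurable_realfun.measurable_funM; last exact: measurable_cst.
  exact: measurableT_comp.
rewrite (eq_integral (fun x => (k%:E * (`|F x| / k)%:E)%E)); last first.
  by move=> x _; rewrite -EFinM mulrCA divff ?gt_eqF // mulr1.
rewrite ge0_integralZl_EFin //; first last.
- exact: ltW.
- exact/measurable_realfun.measurable_EFinP.
- by move=> x _; rewrite lee_fin divr_ge0 // ltW.
rewrite EFinM; apply: lee_wpmul2l; first by rewrite lee_fin ltW.
rewrite -HI; apply: int_mono.
  by move=> x; rewrite lee_fin divr_ge0 // ltW.
by move=> x; rewrite lee_fin ler_pdivrMr // mulrC Fk.
Qed.

Lemma bnd (F : T -> R) k : measurable_fun setT F -> 0 <= k ->
  (forall g, `|F g| <= k * H g) ->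
  mu.-integrable setT (EFin \o F) /\ `|Rintegral mu setT F| <= k * I.
Proof.
move=> mF k0 Fk.
have Fk' e : 0 < e -> forall g, `|F g| <= (k + e) * H g.
  move=> e0 g; apply: le_trans (Fk g) _; apply: ler_wpM2r => //.
  by rewrite lerDl ltW.
have iF : mu.-integrable setT (EFin \o F).
  apply/integrableP; split; first exact/measurable_realfun.measurable_EFinP.
  rewrite (eq_integral (fun x => (`|F x|)%:E)); last by move=> x _; exact: abse_EFin.
  apply: le_lt_trans (@bnd_key F (k + 1) mF _ (Fk' 1 ltr01)) _ => //.
    by rewrite ltr_wpDl.
  exact: ltry.
split => //; apply: le_trans (le_normr_Rintegral _ iF) _ => //.
apply/ler_addgt0Pr => e e0.
have e'0 : 0 < e / (I + 1) by rewrite divr_gt0 // ltr_wpDl ?I_ge0.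
have := @bnd_key F (k + e / (I + 1)) mF (ltr_wpDl k0 e'0) (Fk' _ e'0).
rewrite /Rintegral => h.
have fin : (\int[mu]_x (`|F x|)%:E)%E \is a fin_num.
  rewrite ge0_fin_numE ?(le_lt_trans h) ?ltry //.
  by apply: integral_ge0 => x _; rewrite lee_fin.
rewrite -lee_fin fineK // (le_trans h) // lee_fin mulrDl lerD2l.
rewrite mulrAC ler_pdivrMr ?ltr_wpDl ?I_ge0 // ler_wpM2l ?ltW //.
by rewrite ltrDl.
Qed.

End AuxM.

Section AuxD.
Context {R : realType} {E : pointedType}.
Variable d : E -> E -> R.
Hypothesis d0 : forall x y, 0 <= d x y.

Lemma meas_crit (phi : E -> R) :
  (forall z, exists M, forall y, d z y <= 1 -> `|phi y - phi z| <= M * Num.sqrt (d z y)) ->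
  @measurable_fun _ _ (borelE d) R setT phi.
Proof.
move=> Hphi; apply: (measurability _ (measurable_realfun.RGenInftyO.measurableE R)) => //.
move=> _ [_ [a ->] <-]; apply: sub_sigma_algebra; rewrite setTI.
move=> z /=; rewrite in_itv /= => za.
have [M HM] := Hphi z.
set eps := a - phi z.
have eps0 : 0 < eps by rewrite subr_gt0.
set M' := `|M| + 1.
have M'0 : 0 < M' by rewrite ltr_wpDl.
exists (Num.min 1 ((eps / M') ^+ 2)); split.
  by rewrite lt_min ltr01 exprn_gt0 // divr_gt0.
move=> y /=; rewrite lt_min => /andP[dy1 dye].
rewrite in_itv /=.
have sd : Num.sqrt (d z y) < eps / M'.
  rewrite -(ger0_norm (ltW (divr_gt0 eps0 M'0))) -sqrtr_sqr ltr_sqrt //.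
  by rewrite exprn_gt0 // divr_gt0.
have h1 := HM y (ltW dy1).
have : phi y - phi z < eps.
  apply: le_lt_trans (ler_norm _) _; apply: le_lt_trans h1 _.
  apply: le_lt_trans (_ : M' * Num.sqrt (d z y) < eps).
    apply: ler_wpM2r; first exact: sqrtr_ge0.
    by rewrite (le_trans (ler_norm _)) // lerDl.
  by rewrite -ltr_pdivlMl // mulrC.
by rewrite /eps ltrBrDr subrK.
Qed.

End AuxD.

Section Geo.
Context {R : realType} {E : pointedType} (d : E -> E -> R) (x0 : E) (lam : R).
Hypothesis dm : is_metric d.
Hypothesis lam01 : 0 < lam <= 1.

Lemma d_ge0 x y : 0 <= d x y. Proof. by case: dm. Qed.
Lemma d_sym x y : d x y = d y x. Proof. by case: dm. Qed.
Lemma d_tri x y z : d x z <= d x y + d y z. Proof. by case: dm. Qed.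
Lemma d_xx x : d x x = 0. Proof. by case: dm => _ h _ _; apply/h. Qed.
Lemma d_neq x y : x <> y -> 0 < d x y.
Proof.
move=> xy; rewrite lt_def d_ge0 andbT; apply/eqP => h.
by case: dm => _ h2 _ _; apply: xy; apply/h2.
Qed.

Local Notation p := (plam d x0 lam).

Lemma lam_gt0 : 0 < lam. Proof. by case/andP: lam01. Qed.
Lemma lam_le1 : lam <= 1. Proof. by case/andP: lam01. Qed.

Lemma p_ge1 z : 1 <= p z.
Proof.
rewrite /plam lerDl; apply: mulr_ge0; [exact: ltW lam_gt0|exact: sqrtr_ge0].
Qed.

Lemma p_gt0 z : 0 < p z.
Proof. exact: lt_le_trans ltr01 (p_ge1 z). Qed.

Lemma lsqrt_le_p z : lam * Num.sqrt (d z x0) <= p z.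
Proof. by rewrite /plam lerDr. Qed.

Lemma sqrt_tri z w : Num.sqrt (d z w) <= Num.sqrt (d z x0) + Num.sqrt (d w x0).
Proof.
apply: le_trans _ (sqrtD_le _ _ (d_ge0 _ _) (d_ge0 _ _)).
by rewrite ler_wsqrtr // [d w x0]d_sym d_tri.
Qed.

Lemma lsqrt_le_pp z w : lam * Num.sqrt (d z w) <= 2 * (p z * p w).
Proof.
have h1 := lsqrt_le_p z; have h2 := lsqrt_le_p w.
have g1 := p_ge1 z; have g2 := p_ge1 w.
apply: (@le_trans _ _ (p z + p w)).
  apply: (@le_trans _ _ (lam * (Num.sqrt (d z x0) + Num.sqrt (d w x0)))).
    by apply: ler_wpM2l; [exact: ltW lam_gt0|exact: sqrt_tri].
  by rewrite mulrDr lerD.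
nra.
Qed.

Lemma p_near z y : d z y <= 1 -> p y <= p z + 1.
Proof.
move=> dzy; rewrite /plam -addrA lerD2l.
have s1 : Num.sqrt (d z y) <= 1 by rewrite -sqrtr1 ler_wsqrtr.
have : Num.sqrt (d y x0) <= Num.sqrt (d z y) + Num.sqrt (d z x0).
  apply: le_trans _ (sqrtD_le _ _ (d_ge0 _ _) (d_ge0 _ _)).
  by rewrite ler_wsqrtr // [d z y]d_sym d_tri.
have := sqrtr_ge0 (d z x0); have := sqrtr_ge0 (d y x0).
have := lam_gt0; have := lam_le1; nra.
Qed.

End Geo.

Section Fsec.
Context {R : realType} {E : pointedType} (d : E -> E -> R) (x0 : E) (lam : R).
Hypothesis dm : is_metric d.
Hypothesis lam01 : 0 < lam <= 1.
Local Notation p := (plam d x0 lam).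

Lemma cmod0 : cmod (0 : R[i]) = 0.
Proof. by rewrite /cmod /= expr0n /= addr0 sqrtr0. Qed.

Lemma powR_p z (n : nat) : p z `^ n%:R = p z ^+ n.
Proof. by rewrite powR_mulrn // ltW // (p_gt0 d x0 lam lam01). Qed.

Lemma f_extract (f : E -> R[i]) : (exists x1 x2 : E, x1 <> x2) ->
  inL d x0 lam 1 f -> exists m a, [/\ 0 <= m, 0 <= a,
    normL d x0 lam 1 f = (m + a)%:E,
    (forall x y, cmod (f x - f y) <= m * (Num.sqrt (d x y) * p x * p y)) &
    (forall x, cmod (f x) <= a * p x ^+ 2)].
Proof.
move=> [x1 [x2 x12]] fL.
have pg := p_gt0 d x0 lam lam01.
have den_gt0 x y : x <> y -> 0 < Num.sqrt (d x y) * p x `^ 1 * p y `^ 1.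
  move=> xy; rewrite !powRr1 ?(ltW (pg _)) // !mulr_gt0 //.
  by rewrite sqrtr_gt0 (d_neq d dm).
have mg0 : (0 <= mgam d x0 lam 1 f)%E.
  apply: le_trans (ereal_sup_ubound _); last first.
    by exists x1, x2; split; [exact: x12|reflexivity].
  by rewrite lee_fin divr_ge0 ?cmod_ge0 // ltW // den_gt0.
have ag0 : (0 <= absgam d x0 lam 1 f)%E.
  apply: le_trans (ereal_sup_ubound _); last by exists x0.
  by rewrite lee_fin divr_ge0 ?cmod_ge0 // powR_ge0.
move: fL; rewrite /inL /normL => fL.
have mfin : mgam d x0 lam 1 f \is a fin_num.
  by rewrite ge0_fin_numE // (le_lt_trans _ fL) // leeDl.
have afin : absgam d x0 lam 1 f \is a fin_num.
  by rewrite ge0_fin_numE // (le_lt_trans _ fL) // leeDr.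
exists (fine (mgam d x0 lam 1 f)), (fine (absgam d x0 lam 1 f)); split.
- by rewrite fine_ge0.
- by rewrite fine_ge0.
- by rewrite EFinD !fineK.
- move=> x y; case: (pselect (x = y)) => [<-|xy].
    rewrite subrr cmod0; apply: mulr_ge0; first by rewrite fine_ge0.
    by rewrite !mulr_ge0 ?sqrtr_ge0 ?(ltW (pg _)).
  have := den_gt0 _ _ xy; rewrite !powRr1 ?(ltW (pg _)) // => dg.
  rewrite -ler_pdivrMr // -lee_fin fineK //.
  apply: ereal_sup_ubound; exists x, y; split => //.
  by rewrite !powRr1 ?(ltW (pg _)).
- move=> x; rewrite -ler_pdivrMr ?exprn_gt0 // -lee_fin fineK //.
  apply: ereal_sup_ubound; exists x => //.
  by rewrite (_ : (1 + 1 : R) = 2%:R) // powR_p.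
Qed.

End Fsec.

Lemma leR_eq {R : numDomainType} (x y : R) : x = y -> x <= y.
Proof. by move->. Qed.

Section Usec.
Context {R : realType} {E : pointedType} (d : E -> E -> R) (x0 : E) (lam : R).
Hypothesis dm : is_metric d.
Hypothesis lam01 : 0 < lam <= 1.
Local Notation p := (plam d x0 lam).
Variables (f : E -> R[i]) (m a : R) (xi : E -> R) (C0 t : R).
Hypothesis m0 : 0 <= m.
Hypothesis a0 : 0 <= a.
Hypothesis C00 : 0 <= C0.
Hypothesis Hm : forall x y, cmod (f x - f y) <= m * (Num.sqrt (d x y) * p x * p y).
Hypothesis Ha : forall x, cmod (f x) <= a * p x ^+ 2.
Hypothesis HC : forall x y, `|xi x - xi y| <= C0 * d x y.

Definition ee z := expi (t * xi z).
Definition uu z := ee z * f z - f z.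
Definition A1 := `|xi x0| + C0 / lam ^+ 2.
Definition A2 := 2 * A1 + 4 * C0 / lam.

Let pg z := p_gt0 d x0 lam lam01 z.
Let p1 z := p_ge1 d x0 lam lam01 z.
Let l0 := lam_gt0 lam lam01.

Lemma A1_ge0 : 0 <= A1.
Proof. by rewrite /A1 addr_ge0 // divr_ge0 // exprn_ge0 // ltW. Qed.

Lemma A2_ge0 : 0 <= A2.
Proof.
rewrite /A2; apply: addr_ge0; first by apply: mulr_ge0 => //; exact: A1_ge0.
by apply: divr_ge0; [exact: mulr_ge0 | exact: ltW].
Qed.

Lemma L_xi z : `|xi z| <= A1 * p z ^+ 2.
Proof.
have h1 : `|xi z| <= `|xi x0| + C0 * d z x0.
  rewrite -[xi z](subrK (xi x0)) (le_trans (ler_normD _ _)) // addrC lerD2l.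
  exact: HC.
have hd : d z x0 <= p z ^+ 2 / lam ^+ 2.
  rewrite ler_pdivlMr ?exprn_gt0 //.
  rewrite -[d z x0]sqr_sqrtr ?(d_ge0 d dm) // -exprMn.
  rewrite lerXn2r ?nnegrE ?mulr_ge0 ?sqrtr_ge0 ?(ltW (pg _)) ?(ltW l0) //.
  rewrite mulrC; exact: lsqrt_le_p.
apply: le_trans h1 _; rewrite /A1 mulrDl.
have q1 : 1 <= p z ^+ 2 by rewrite exprn_ege1 // p1.
apply: lerD.
  by rewrite ler_peMr.
rewrite -mulrA ler_wpM2l // mulrC; exact: hd.
Qed.

Lemma expi0 : expi 0 = 1 :> R[i].
Proof. by rewrite /expi cos0 sin0. Qed.

Lemma L_e1 z : cmod (ee z - 1) <= 2 * (`|t| * `|xi z|).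
Proof.
by rewrite -expi0 /ee (le_trans (cmod_expiB _ _)) // subr0 normrM.
Qed.

Lemma L_ee z w : cmod (ee z - ee w) <= 2 * (`|t| * (C0 * d z w)).
Proof.
rewrite /ee (le_trans (cmod_expiB _ _)) // -mulrBr normrM.
by rewrite ler_wpM2l // ler_wpM2l // HC.
Qed.

Lemma L_u z : cmod (uu z) <= 2 * A1 * a * `|t| * p z ^+ 4.
Proof.
have -> : uu z = (ee z - 1) * f z by rewrite /uu mulrBl mul1r.
rewrite cmodM.
apply: le_trans (_ : (2 * (`|t| * (A1 * p z ^+ 2))) * (a * p z ^+ 2) <= _).
  apply: ler_pM; rewrite ?cmod_ge0 // (le_trans (L_e1 z)) //.
  by rewrite ler_wpM2l // ler_wpM2l // L_xi.
by rewrite (_ : 4 = 2 + 2)%N // exprD; apply: leR_eq; ring.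
Qed.

Lemma L_uu z w : cmod (uu z - uu w) <=
  A2 * `|t| * (m + a) * (Num.sqrt (d z w) * (p z * p w) ^+ 3).
Proof.
have -> : uu z - uu w = (ee z - 1) * (f z - f w) + (ee z - ee w) * f w.
  by rewrite /uu; ring.
have hS := lsqrt_le_pp d x0 lam dm lam01 z w.
have hd : d z w = Num.sqrt (d z w) * Num.sqrt (d z w).
  by rewrite -expr2 sqr_sqrtr // (d_ge0 d dm).
have hm := Hm z w; have ha := Ha w; have he1 := L_e1 z; have hee := L_ee z w.
have hx := L_xi z.
move: hS hd hm ha he1 hee hx.
set S := Num.sqrt (d z w); set P := p z; set Q := p w.
move=> hS hd hm ha he1 hee hx.
have S0 : 0 <= S := sqrtr_ge0 _.
have P1 : 1 <= P := p1 z. have Q1 : 1 <= Q := p1 w.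
have P0 : 0 <= P by apply: le_trans P1.
have Q0 : 0 <= Q by apply: le_trans Q1.
have t0 : 0 <= `|t| := normr_ge0 t.
have A10 := A1_ge0.
set X := `|t| * S * (P * Q) ^+ 3.
have X0 : 0 <= X by rewrite /X !mulr_ge0 // exprn_ge0 // mulr_ge0.
have T1 : cmod (ee z - 1) * cmod (f z - f w) <= 2 * A1 * m * X.
  apply: le_trans (_ : (2 * (`|t| * (A1 * P ^+ 2))) * (m * (S * P * Q)) <= _).
    apply: ler_pM; rewrite ?cmod_ge0 //.
    by rewrite (le_trans he1) // ler_wpM2l // ler_wpM2l.
  have -> : 2 * (`|t| * (A1 * P ^+ 2)) * (m * (S * P * Q)) =
    (2 * A1 * m * `|t| * S * P ^+ 3) * Q by ring.
  have -> : 2 * A1 * m * X = (2 * A1 * m * `|t| * S * P ^+ 3) * Q ^+ 3.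
    by rewrite /X; ring.
  apply: ler_wpM2l; last exact: ler_eXnr.
  by rewrite !mulr_ge0 // exprn_ge0.
have hS' : S <= 2 * (P * Q) / lam by rewrite ler_pdivlMr // mulrC.
have T2 : cmod (ee z - ee w) * cmod (f w) <= 4 * C0 / lam * a * X.
  apply: le_trans (_ : (2 * (`|t| * (C0 * d z w))) * (a * Q ^+ 2) <= _).
    by apply: ler_pM; rewrite ?cmod_ge0.
  rewrite hd.
  have -> : 2 * (`|t| * (C0 * (S * S))) * (a * Q ^+ 2) =
    (2 * `|t| * C0 * S * a * Q ^+ 2) * S by ring.
  apply: le_trans (_ : (2 * `|t| * C0 * S * a * Q ^+ 2) * (2 * (P * Q) / lam) <= _).
    by apply: ler_wpM2l => //; rewrite !mulr_ge0 // exprn_ge0.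
  have -> : 2 * `|t| * C0 * S * a * Q ^+ 2 * (2 * (P * Q) / lam) =
    (4 * C0 / lam * a * `|t| * S * Q ^+ 3) * P by ring.
  have -> : 4 * C0 / lam * a * X = (4 * C0 / lam * a * `|t| * S * Q ^+ 3) * P ^+ 3.
    by rewrite /X; ring.
  apply: ler_wpM2l; last exact: ler_eXnr.
  by rewrite !mulr_ge0 ?exprn_ge0 ?invr_ge0 ?(ltW l0).
apply: le_trans (cmodD _ _) _; rewrite !cmodM.
apply: le_trans (lerD T1 T2) _.
have -> : A2 * `|t| * (m + a) * (S * (P * Q) ^+ 3) = A2 * (m + a) * X.
  by rewrite /X; ring.
have B0 : 0 <= 4 * C0 / lam by rewrite divr_ge0 ?mulr_ge0 // ltW.
rewrite /A2.
have e1 : 0 <= 2 * A1 * a * X by rewrite !mulr_ge0.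
have e2 : 0 <= 4 * C0 / lam * m * X by rewrite !mulr_ge0 ?invr_ge0 ?(ltW l0).
have -> : (2 * A1 + 4 * C0 / lam) * (m + a) * X =
  (2 * A1 * m * X + 4 * C0 / lam * a * X) + (2 * A1 * a * X + 4 * C0 / lam * m * X).
  by ring.
by rewrite lerDl addr_ge0.
Qed.

End Usec.

Lemma ReB {R : realType} (z w : R[i]) : complex.Re (z - w) = complex.Re z - complex.Re w.
Proof. by case: z; case: w. Qed.
Lemma ImB {R : realType} (z w : R[i]) : complex.Im (z - w) = complex.Im z - complex.Im w.
Proof. by case: z; case: w. Qed.

Section U2sec.
Context {R : realType} {E : pointedType} (d : E -> E -> R) (x0 : E) (lam : R).
Hypothesis dm : is_metric d.
Hypothesis lam01 : 0 < lam <= 1.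
Local Notation p := (plam d x0 lam).
Variables (f : E -> R[i]) (m a : R) (xi : E -> R) (C0 t : R).
Hypothesis m0 : 0 <= m.
Hypothesis a0 : 0 <= a.
Hypothesis C00 : 0 <= C0.
Hypothesis Hm : forall x y, cmod (f x - f y) <= m * (Num.sqrt (d x y) * p x * p y).
Hypothesis Ha : forall x, cmod (f x) <= a * p x ^+ 2.
Hypothesis HC : forall x y, `|xi x - xi y| <= C0 * d x y.

Let pg z := p_gt0 d x0 lam lam01 z.

Lemma LH_f z : exists M, forall y, d z y <= 1 ->
  cmod (f y - f z) <= M * Num.sqrt (d z y).
Proof.
exists (m * ((p z + 1) * p z)) => y dzy.
apply: le_trans (Hm y z) _; rewrite (d_sym d dm y z).
have h : Num.sqrt (d z y) * p y * p z <= (p z + 1) * p z * Num.sqrt (d z y).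
  rewrite [in leRHS]mulrC mulrA; apply: ler_wpM2r; first exact: ltW (pg _).
  apply: ler_wpM2l; first exact: sqrtr_ge0.
  exact: p_near.
by rewrite -[in leRHS]mulrA; apply: ler_wpM2l.
Qed.

Lemma LH_ef z : exists M, forall y, d z y <= 1 ->
  cmod (ee xi t y * f y - ee xi t z * f z) <= M * Num.sqrt (d z y).
Proof.
have [M1 HM1] := LH_f z.
exists (2 * `|t| * C0 * a * (p z + 1) ^+ 2 + M1) => y dzy.
have -> : ee xi t y * f y - ee xi t z * f z =
  (ee xi t y - ee xi t z) * f y + ee xi t z * (f y - f z) by ring.
apply: le_trans (cmodD _ _) _; rewrite !cmodM /ee cmod_expi mul1r mulrDl.
apply: lerD; last exact: HM1.
have S0 := sqrtr_ge0 (d z y).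
have S1 : Num.sqrt (d z y) <= 1 by rewrite -sqrtr1 ler_wsqrtr.
have hd : d y z <= Num.sqrt (d z y).
  rewrite (d_sym d dm) -{1}[d z y]sqr_sqrtr ?(d_ge0 d dm) // expr2.
  by rewrite ler_piMl.
have py := p_near d x0 lam dm lam01 _ _ dzy.
apply: le_trans (_ : (2 * (`|t| * (C0 * d y z))) * (a * p y ^+ 2) <= _).
  apply: ler_pM; rewrite ?cmod_ge0 //.
  exact: L_ee.
have pz0 := ltW (pg z); have py0 := ltW (pg y).
have -> : 2 * (`|t| * (C0 * d y z)) * (a * p y ^+ 2) =
  (2 * `|t| * C0 * a) * (d y z * p y ^+ 2) by ring.
rewrite (_ : 2 * `|t| * C0 * a * (p z + 1) ^+ 2 * Num.sqrt (d z y) =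
  (2 * `|t| * C0 * a) * ((p z + 1) ^+ 2 * Num.sqrt (d z y))); last by ring.
apply: ler_wpM2l; first by rewrite !mulr_ge0.
rewrite mulrC; apply: ler_pM => //; first by rewrite exprn_ge0.
  exact: (d_ge0 d dm).
by rewrite lerXn2r ?nnegrE // addr_ge0.
Qed.

End U2sec.

Section Comp.
Context {R : realType} {E : pointedType} (d : E -> E -> R).
Context {dG : measure_display} {G : measurableType dG} (act : G -> E -> E).
Hypothesis mact : @measurable_fun _ _ (G * borelE d)%type (borelE d) setT
    (fun p => act p.1 p.2).

Lemma meas_comp (phi : E -> R) x :
  @measurable_fun _ _ (borelE d) R setT phi ->
  measurable_fun setT (fun g : G => phi (act g x)).
Proof.
move=> mphi.
have h := measurableT_comp mact (@pair2_measurable _ _ G (borelE d) x).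
exact: (measurableT_comp mphi h).
Qed.

Lemma meas_Re (psi : E -> R[i]) x : (forall x y, 0 <= d x y) ->
  (forall z, exists M, forall y, d z y <= 1 ->
    cmod (psi y - psi z) <= M * Num.sqrt (d z y)) ->
  measurable_fun setT (fun g : G => complex.Re (psi (act g x))) /\
  measurable_fun setT (fun g : G => complex.Im (psi (act g x))).
Proof.
move=> d0 H; split.
  apply: (meas_comp (fun z => complex.Re (psi z))).
  apply: meas_crit => // z; have [M HM] := H z; exists M => y dzy.
  by rewrite -ReB (le_trans (cmod_Re _)) // HM.
apply: (meas_comp (fun z => complex.Im (psi z))).
apply: meas_crit => // z; have [M HM] := H z; exists M => y dzy.
by rewrite -ImB (le_trans (cmod_Im _)) // HM.
Qed.

End Comp.

Section Main.
Context {R : realType} {E : pointedType} (d : E -> E -> R) (x0 : E).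
Context {dG : measure_display} {G : measurableType dG} (act : G -> E -> E).
Variable (lam : R).
Hypothesis dm : is_metric d.
Hypothesis lam01 : 0 < lam <= 1.
Hypothesis two : exists x1 x2 : E, x1 <> x2.
Hypothesis lip : forall g, dlipschitz d (act g).
Local Notation p := (plam d x0 lam).

Definition cc g := lipc d (act g).
Definition rr g := d (act g x0) x0.
Definition Gp g := 1 + Num.sqrt (cc g) + Num.sqrt (rr g).
Definition HH g := (Gam d act x0 g) ^+ 3 * (1 + Num.sqrt (cc g)).

Lemma lip_c g x y : d (act g x) (act g y) <= cc g * d x y.
Proof.
case: (pselect (x = y)) => [<-|xy].
  by rewrite !(d_xx d dm) mulr0.
have [C HC] := lip g.
set S := [set r | exists x y, x <> y /\ r = d (act g x) (act g y) / d x y].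
have hub : has_ubound S.
  exists C => _ [u [v [uv ->]]].
  by rewrite ler_pdivrMr ?(d_neq d dm).
have := @ub_le_sup R S hub (d (act g x) (act g y) / d x y) (ex_intro _ x (ex_intro _ y (conj xy erefl))).
rewrite -/(lipc d (act g)) -/(cc g) => h.
by rewrite -ler_pdivrMr ?(d_neq d dm).
Qed.

Lemma c_ge0 g : 0 <= cc g.
Proof.
have [x1 [x2 x12]] := two.
have := lip_c g x1 x2.
have := d_neq d dm _ _ x12; have := d_ge0 d dm (act g x1) (act g x2).
nra.
Qed.

Lemma r_ge0 g : 0 <= rr g. Proof. exact: d_ge0. Qed.

Lemma sq_act g x y : Num.sqrt (d (act g x) (act g y)) <= Num.sqrt (cc g) * Num.sqrt (d x y).
Proof. by rewrite -sqrtrM ?c_ge0 // ler_wsqrtr // lip_c. Qed.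

Lemma p_act g x : p (act g x) <= Gp g * p x.
Proof.
have h1 : d (act g x) x0 <= cc g * d x x0 + rr g.
  apply: le_trans (d_tri d dm _ (act g x0) _) _.
  by rewrite lerD2r lip_c.
have h2 : Num.sqrt (d (act g x) x0) <= Num.sqrt (cc g) * Num.sqrt (d x x0) + Num.sqrt (rr g).
  apply: le_trans (_ : Num.sqrt (cc g * d x x0 + rr g) <= _).
    exact: ler_wsqrtr.
  rewrite -sqrtrM ?c_ge0 //; apply: sqrtD_le; last exact: r_ge0.
  by rewrite mulr_ge0 ?c_ge0 ?(d_ge0 d dm).
rewrite /plam /Gp.
have s0 := sqrtr_ge0 (cc g); have q0 := sqrtr_ge0 (rr g).
have D0 := sqrtr_ge0 (d x x0).
have l0 := lam_gt0 lam lam01; have l1 := lam_le1 lam lam01.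
have e1 : 0 <= lam * Num.sqrt (rr g) * Num.sqrt (d x x0) by rewrite !mulr_ge0 // ltW.
have e2 : 0 <= Num.sqrt (cc g) * Num.sqrt (d x x0) by rewrite mulr_ge0.
have e3 : lam * Num.sqrt (d (act g x) x0) <= lam * (Num.sqrt (cc g) * Num.sqrt (d x x0) + Num.sqrt (rr g)).
  by apply: ler_wpM2l => //; exact: ltW.
have e4 : lam * Num.sqrt (rr g) <= Num.sqrt (rr g) by rewrite ler_piMl.
have e5 : 0 <= lam * Num.sqrt (d x x0) by rewrite mulr_ge0 // ltW.
apply: (le_trans (_ : _ <= 1 + lam * (Num.sqrt (cc g) * Num.sqrt (d x x0) + Num.sqrt (rr g)))).
  by rewrite lerD2l.
rewrite (_ : (1 + Num.sqrt (cc g) + Num.sqrt (rr g)) * (1 + lam * Num.sqrt (d x x0)) =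
  1 + lam * (Num.sqrt (cc g) * Num.sqrt (d x x0) + Num.sqrt (rr g)) +
  (lam * Num.sqrt (d x x0) + Num.sqrt (cc g) + (Num.sqrt (rr g) - lam * Num.sqrt (rr g))
   + lam * Num.sqrt (rr g) * Num.sqrt (d x x0))); last by ring.
have e6 : 0 <= Num.sqrt (rr g) - lam * Num.sqrt (rr g) by rewrite subr_ge0.
by rewrite lerDl; apply: addr_ge0 => //; apply: addr_ge0 => //; apply: addr_ge0.
Qed.

Lemma Gam_E g : Gam d act x0 g = 1 + cc g + rr g.
Proof. by []. Qed.

Lemma Gp_bnd g : [/\ Gp g ^+ 2 <= 3 * HH g, Gp g ^+ 4 <= 9 * HH g,
  Num.sqrt (cc g) * Gp g ^+ 6 <= 27 * HH g & 1 <= HH g].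
Proof.
have s0 := sqrtr_ge0 (cc g); have q0 := sqrtr_ge0 (rr g).
have c0 := c_ge0 g; have r0 := r_ge0 g.
have sc : Num.sqrt (cc g) ^+ 2 = cc g by rewrite sqr_sqrtr.
have sr : Num.sqrt (rr g) ^+ 2 = rr g by rewrite sqr_sqrtr.
set s := Num.sqrt (cc g) in s0 sc *; set q := Num.sqrt (rr g) in q0 sr *.
set Ga := Gam d act x0 g.
have GaE : Ga = 1 + cc g + rr g by [].
have Ga1 : 1 <= Ga by rewrite GaE -addrA lerDl addr_ge0.
have G2 : Gp g ^+ 2 <= 3 * Ga.
  rewrite /Gp -/s -/q GaE -sc -sr.
  have := sqr_ge0 (1 - s); have := sqr_ge0 (1 - q); have := sqr_ge0 (s - q).
  move=> h1 h2 h3; apply: (le_trans (_ : _ <= (1 + s + q) ^+ 2 + ((1 - s) ^+ 2 + (1 - q) ^+ 2 + (s - q) ^+ 2))).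
    by rewrite lerDl !addr_ge0.
  by apply: leR_eq; ring.
have Gp0 : 0 <= Gp g by rewrite /Gp !addr_ge0.
have Ga3 : Ga <= Ga ^+ 3 by apply: ler_eXnr.
have Ga2 : Ga ^+ 2 <= Ga ^+ 3.
  rewrite [in leRHS]exprS; apply: ler_peMl => //.
  by rewrite exprn_ge0 // (le_trans ler01 Ga1).
have H3 : Ga ^+ 3 <= HH g.
  rewrite /HH -/Ga -/s; apply: ler_peMr; last by rewrite lerDl.
  by rewrite exprn_ge0 // (le_trans ler01 Ga1).
have Ga0 : 0 <= Ga by apply: le_trans ler01 Ga1.
have G4 : Gp g ^+ 4 <= 9 * Ga ^+ 2.
  have -> : Gp g ^+ 4 = (Gp g ^+ 2) ^+ 2 by rewrite -exprM.
  have -> : 9 * Ga ^+ 2 = (3 * Ga) ^+ 2 by ring.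
  by rewrite lerXn2r // nnegrE ?exprn_ge0 ?mulr_ge0.
have G6 : Gp g ^+ 6 <= 27 * Ga ^+ 3.
  have -> : Gp g ^+ 6 = (Gp g ^+ 2) ^+ 3 by rewrite -exprM.
  have -> : 27 * Ga ^+ 3 = (3 * Ga) ^+ 3 by ring.
  by rewrite lerXn2r // nnegrE ?exprn_ge0 ?mulr_ge0.
split.
- apply: le_trans G2 _; apply: ler_wpM2l => //; exact: le_trans Ga3 H3.
- apply: le_trans G4 _; apply: ler_wpM2l => //; exact: le_trans Ga2 H3.
- apply: le_trans (_ : s * (27 * Ga ^+ 3) <= _); first exact: ler_wpM2l.
  rewrite /HH -/Ga -/s mulrCA ler_wpM2l // mulrC ler_wpM2l ?exprn_ge0 ?(le_trans ler01) //.
  by rewrite lerDr.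
- by apply: le_trans H3; apply: exprn_ege1.
Qed.

End Main.

Section Final.
Context {R : realType} {E : pointedType} (d : E -> E -> R) (x0 : E).
Context {dG : measure_display} {G : measurableType dG} (act : G -> E -> E).
Variables (P : probability G R) (xi : E -> R) (lam C0 I : R).
Hypothesis dm : is_metric d.
Hypothesis lam01 : 0 < lam <= 1.
Hypothesis two : exists x1 x2 : E, x1 <> x2.
Hypothesis lip : forall g, dlipschitz d (act g).
Hypothesis mact : @measurable_fun _ _ (G * borelE d)%type (borelE d) setT
    (fun p => act p.1 p.2).
Hypothesis C00 : 0 <= C0.
Hypothesis HC : forall x y, `|xi x - xi y| <= C0 * d x y.
Hypothesis HI : (\int[P]_x (HH d x0 act x)%:E = I%:E)%E.
Local Notation p := (plam d x0 lam).

Variables (f : E -> R[i]) (m a t : R).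
Hypothesis m0 : 0 <= m.
Hypothesis a0 : 0 <= a.
Hypothesis Hm : forall x y, cmod (f x - f y) <= m * (Num.sqrt (d x y) * p x * p y).
Hypothesis Ha : forall x, cmod (f x) <= a * p x ^+ 2.

Let HH0 g : 0 <= HH d x0 act g.
Proof. by have [_ _ _ h] := Gp_bnd d x0 act dm two lip g; apply: le_trans h. Qed.
Let I0 : 0 <= I := @I_ge0 _ _ _ P _ _ HH0 HI.
Let pg z := p_gt0 d x0 lam lam01 z.
Let Gp0 g : 0 <= Gp d x0 act g.
Proof. by rewrite /Gp !addr_ge0 ?sqrtr_ge0. Qed.

Let pact2 g x : p (act g x) ^+ 2 <= Gp d x0 act g ^+ 2 * p x ^+ 2.
Proof.
have h := p_act d x0 act lam dm lam01 two lip g x.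
rewrite -exprMn lerXn2r ?nnegrE //; first exact: ltW (pg _).
by rewrite mulr_ge0 // ltW.
Qed.

Let cmod_f_act x g : cmod (f (act g x)) <= (3 * a * p x ^+ 2) * HH d x0 act g.
Proof.
have [h2 _ _ _] := Gp_bnd d x0 act dm two lip g.
apply: le_trans (Ha _) _.
apply: le_trans (_ : a * (Gp d x0 act g ^+ 2 * p x ^+ 2) <= _).
  by apply: ler_wpM2l => //; exact: pact2.
have -> : 3 * a * p x ^+ 2 * HH d x0 act g = a * ((3 * HH d x0 act g) * p x ^+ 2) by ring.
apply: ler_wpM2l => //; apply: ler_wpM2r => //; exact: exprn_ge0 (ltW (pg _)).
Qed.

Definition RE x g := complex.Re (ee xi t (act g x) * f (act g x)).
Definition IE x g := complex.Im (ee xi t (act g x) * f (act g x)).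
Definition RF x g := complex.Re (f (act g x)).
Definition IF x g := complex.Im (f (act g x)).
Definition RU x g := RE x g - RF x g.
Definition IU x g := IE x g - IF x g.

Let LHef := LH_ef d x0 lam dm lam01 f m a xi C0 t m0 a0 C00 Hm Ha HC.
Let LHf := LH_f d x0 lam dm lam01 f m m0 Hm.
Let d0 := d_ge0 d dm.

Let mRE x : measurable_fun setT (RE x).
Proof. exact: (meas_Re d act mact (fun z => ee xi t z * f z) x d0 LHef).1. Qed.
Let mIE x : measurable_fun setT (IE x).
Proof. exact: (meas_Re d act mact (fun z => ee xi t z * f z) x d0 LHef).2. Qed.
Let mRF x : measurable_fun setT (RF x).
Proof. exact: (meas_Re d act mact f x d0 LHf).1. Qed.
Let mIF x : measurable_fun setT (IF x).
Proof. exact: (meas_Re d act mact f x d0 LHf).2. Qed.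

Let cmod_ef z : cmod (ee xi t z * f z) = cmod (f z).
Proof. by rewrite cmodM /ee cmod_expi mul1r. Qed.

Let k0 x : 0 <= 3 * a * p x ^+ 2.
Proof. by rewrite !mulr_ge0 // ?exprn_ge0 // ltW. Qed.

Let bRE x g : `|RE x g| <= 3 * a * p x ^+ 2 * HH d x0 act g.
Proof. by rewrite (le_trans (cmod_Re _)) // cmod_ef cmod_f_act. Qed.
Let iRE x : P.-integrable setT (EFin \o RE x) :=
  (@bnd _ _ _ P _ _ HH0 HI _ _ (mRE x) (k0 x) (bRE x)).1.
Let bIE x g : `|IE x g| <= 3 * a * p x ^+ 2 * HH d x0 act g.
Proof. by rewrite (le_trans (cmod_Im _)) // cmod_ef cmod_f_act. Qed.
Let iIE x : P.-integrable setT (EFin \o IE x) :=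
  (@bnd _ _ _ P _ _ HH0 HI _ _ (mIE x) (k0 x) (bIE x)).1.
Let bRF x g : `|RF x g| <= 3 * a * p x ^+ 2 * HH d x0 act g.
Proof. by rewrite (le_trans (cmod_Re _)) // cmod_f_act. Qed.
Let iRF x : P.-integrable setT (EFin \o RF x) :=
  (@bnd _ _ _ P _ _ HH0 HI _ _ (mRF x) (k0 x) (bRF x)).1.
Let bIF x g : `|IF x g| <= 3 * a * p x ^+ 2 * HH d x0 act g.
Proof. by rewrite (le_trans (cmod_Im _)) // cmod_f_act. Qed.
Let iIF x : P.-integrable setT (EFin \o IF x) :=
  (@bnd _ _ _ P _ _ HH0 HI _ _ (mIF x) (k0 x) (bIF x)).1.

Definition FF x := Qt act P xi t f x - Qop act P f x.

Lemma FF_E x : FF x = Complex (Rintegral P setT (RU x)) (Rintegral P setT (IU x)).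
Proof.
rewrite /RU /IU !RintegralB //.
Qed.

Lemma ComplexB (u v w z : R) : Complex u v - Complex w z = Complex (u - w) (v - z) :> R[i].
Proof. by []. Qed.

Let mRU x : measurable_fun setT (RU x).
Proof. exact: measurable_realfun.measurable_funB. Qed.
Let mIU x : measurable_fun setT (IU x).
Proof. exact: measurable_realfun.measurable_funB. Qed.

Let A10 := A1_ge0 x0 lam lam01 xi C0 C00.
Let A20 := A2_ge0 x0 lam lam01 xi C0 C00.

Let pact4 g x : p (act g x) ^+ 4 <= Gp d x0 act g ^+ 4 * p x ^+ 4.
Proof.
have h := p_act d x0 act lam dm lam01 two lip g x.
rewrite -exprMn lerXn2r ?nnegrE //; first exact: ltW (pg _).
by rewrite mulr_ge0 // ltW.
Qed.

Let cmod_uu x g : cmod (uu f xi t (act g x)) <=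
  (18 * A1 x0 lam xi C0 * a * `|t| * p x ^+ 4) * HH d x0 act g.
Proof.
have [_ h4 _ _] := Gp_bnd d x0 act dm two lip g.
apply: le_trans (L_u d x0 lam dm lam01 f a xi C0 t C00 Ha HC _) _.
have e0 : 0 <= 2 * A1 x0 lam xi C0 * a * `|t| by rewrite !mulr_ge0.
apply: le_trans (_ : 2 * A1 x0 lam xi C0 * a * `|t| * (Gp d x0 act g ^+ 4 * p x ^+ 4) <= _).
  by apply: ler_wpM2l.
have -> : 18 * A1 x0 lam xi C0 * a * `|t| * p x ^+ 4 * HH d x0 act g =
  2 * A1 x0 lam xi C0 * a * `|t| * ((9 * HH d x0 act g) * p x ^+ 4) by ring.
apply: ler_wpM2l => //; apply: ler_wpM2r => //; exact: exprn_ge0 (ltW (pg _)).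
Qed.

Let kU0 x : 0 <= 18 * A1 x0 lam xi C0 * a * `|t| * p x ^+ 4.
Proof. by rewrite !mulr_ge0 // ?exprn_ge0 // ltW. Qed.

Let bRU x g : `|RU x g| <= (18 * A1 x0 lam xi C0 * a * `|t| * p x ^+ 4) * HH d x0 act g.
Proof. by rewrite /RU /RE /RF -ReB (le_trans (cmod_Re _)) // cmod_uu. Qed.
Let bIU x g : `|IU x g| <= (18 * A1 x0 lam xi C0 * a * `|t| * p x ^+ 4) * HH d x0 act g.
Proof. by rewrite /IU /IE /IF -ImB (le_trans (cmod_Im _)) // cmod_uu. Qed.

Let iRU x : P.-integrable setT (EFin \o RU x) :=
  (@bnd _ _ _ P _ _ HH0 HI _ _ (mRU x) (kU0 x) (bRU x)).1.
Let iIU x : P.-integrable setT (EFin \o IU x) :=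
  (@bnd _ _ _ P _ _ HH0 HI _ _ (mIU x) (kU0 x) (bIU x)).1.

Lemma FF_abs x : cmod (FF x) <= 36 * A1 x0 lam xi C0 * I * `|t| * a * p x ^+ 4.
Proof.
rewrite FF_E; apply: le_trans (cmod_Complex _ _) _.
have h1 := (@bnd _ _ _ P _ _ HH0 HI _ _ (mRU x) (kU0 x) (bRU x)).2.
have h2 := (@bnd _ _ _ P _ _ HH0 HI _ _ (mIU x) (kU0 x) (bIU x)).2.
apply: le_trans (lerD h1 h2) _; apply: leR_eq; ring.
Qed.

Let cmod_uuu x y g : cmod (uu f xi t (act g x) - uu f xi t (act g y)) <=
  (27 * A2 x0 lam xi C0 * `|t| * (m + a) * (Num.sqrt (d x y) * (p x * p y) ^+ 3))
  * HH d x0 act g.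
Proof.
have [_ _ h6 _] := Gp_bnd d x0 act dm two lip g.
apply: le_trans (L_uu d x0 lam dm lam01 f m a xi C0 t m0 a0 C00 Hm Ha HC _ _) _.
have e0 : 0 <= A2 x0 lam xi C0 * `|t| * (m + a) by rewrite !mulr_ge0 // addr_ge0.
have hs := sq_act d act dm two lip g x y.
have hp1 := p_act d x0 act lam dm lam01 two lip g x.
have hp2 := p_act d x0 act lam dm lam01 two lip g y.
have hpp : (p (act g x) * p (act g y)) ^+ 3 <= Gp d x0 act g ^+ 6 * (p x * p y) ^+ 3.
  have -> : Gp d x0 act g ^+ 6 * (p x * p y) ^+ 3 =
    ((Gp d x0 act g * p x) * (Gp d x0 act g * p y)) ^+ 3.
    by rewrite (_ : 6 = 2 * 3)%N // exprM -!exprMn; congr (_ ^+ _); ring.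
  rewrite lerXn2r ?nnegrE ?mulr_ge0 ?(ltW (pg _)) //.
  by apply: ler_pM => //; exact: ltW (pg _).
apply: le_trans (_ : A2 x0 lam xi C0 * `|t| * (m + a) *
   ((Num.sqrt (cc d act g) * Num.sqrt (d x y)) * (Gp d x0 act g ^+ 6 * (p x * p y) ^+ 3)) <= _).
  apply: ler_wpM2l => //; apply: ler_pM => //.
  by rewrite exprn_ge0 // mulr_ge0 // ltW.
have -> : 27 * A2 x0 lam xi C0 * `|t| * (m + a) *
    (Num.sqrt (d x y) * (p x * p y) ^+ 3) * HH d x0 act g =
  A2 x0 lam xi C0 * `|t| * (m + a) * (Num.sqrt (d x y) * (p x * p y) ^+ 3) *
  (27 * HH d x0 act g) by ring.
have -> : A2 x0 lam xi C0 * `|t| * (m + a) *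
   ((Num.sqrt (cc d act g) * Num.sqrt (d x y)) * (Gp d x0 act g ^+ 6 * (p x * p y) ^+ 3)) =
  A2 x0 lam xi C0 * `|t| * (m + a) * (Num.sqrt (d x y) * (p x * p y) ^+ 3) *
  (Num.sqrt (cc d act g) * Gp d x0 act g ^+ 6) by ring.
apply: ler_wpM2l => //.
apply: mulr_ge0 => //; apply: mulr_ge0; first exact: sqrtr_ge0.
by apply: exprn_ge0; apply: mulr_ge0; exact: ltW (pg _).
Qed.

Let kD0 x y : 0 <= 27 * A2 x0 lam xi C0 * `|t| * (m + a) * (Num.sqrt (d x y) * (p x * p y) ^+ 3).
Proof.
apply: mulr_ge0; first by rewrite !mulr_ge0 // addr_ge0.
apply: mulr_ge0; first exact: sqrtr_ge0.
by apply: exprn_ge0; apply: mulr_ge0; exact: ltW (pg _).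
Qed.

Let mRD x y : measurable_fun setT (fun g => RU x g - RU y g).
Proof. exact: measurable_realfun.measurable_funB. Qed.
Let mID x y : measurable_fun setT (fun g => IU x g - IU y g).
Proof. exact: measurable_realfun.measurable_funB. Qed.

Let bRD x y g : `|RU x g - RU y g| <= (27 * A2 x0 lam xi C0 * `|t| * (m + a) *
   (Num.sqrt (d x y) * (p x * p y) ^+ 3)) * HH d x0 act g.
Proof. by rewrite /RU /RE /RF -!ReB (le_trans (cmod_Re _)) // cmod_uuu. Qed.
Let bID x y g : `|IU x g - IU y g| <= (27 * A2 x0 lam xi C0 * `|t| * (m + a) *
   (Num.sqrt (d x y) * (p x * p y) ^+ 3)) * HH d x0 act g.
Proof. by rewrite /IU /IE /IF -!ImB (le_trans (cmod_Im _)) // cmod_uuu. Qed.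

Lemma FF_diff x y : cmod (FF x - FF y) <=
  54 * A2 x0 lam xi C0 * I * `|t| * (m + a) * (Num.sqrt (d x y) * (p x * p y) ^+ 3).
Proof.
rewrite !FF_E ComplexB -!RintegralB //.
apply: le_trans (cmod_Complex _ _) _.
have h1 := (@bnd _ _ _ P _ _ HH0 HI _ _ (mRD x y) (kD0 x y) (bRD x y)).2.
have h2 := (@bnd _ _ _ P _ _ HH0 HI _ _ (mID x y) (kD0 x y) (bID x y)).2.
apply: le_trans (lerD h1 h2) _; apply: leR_eq; ring.
all: first [exact: iRU | exact: iIU].
Qed.

Lemma FF_norm : (normL d x0 lam 3 FF <=
  ((54 * A2 x0 lam xi C0 * I + 36 * A1 x0 lam xi C0 * I) * `|t| * (m + a))%:E)%E.
Proof.
rewrite /normL /mgam /absgam.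
have -> : ((54 * A2 x0 lam xi C0 * I + 36 * A1 x0 lam xi C0 * I) * `|t| * (m + a))%:E =
  ((54 * A2 x0 lam xi C0 * I * `|t| * (m + a))%:E +
   (36 * A1 x0 lam xi C0 * I * `|t| * (m + a))%:E)%E.
  by rewrite -EFinD; congr EFin; ring.
apply: leeD.
- apply: ge_ereal_sup => _ [x [y [xy ->]]]; rewrite lee_fin.
  rewrite !(powR_p d x0 lam lam01).
  have dp : 0 < Num.sqrt (d x y) * p x ^+ 3 * p y ^+ 3.
    by rewrite !mulr_gt0 ?exprn_gt0 // sqrtr_gt0 (d_neq d dm).
  rewrite ler_pdivrMr //; apply: le_trans (FF_diff x y) _.
  by apply: leR_eq; rewrite exprMn; ring.
- apply: ge_ereal_sup => _ [x _ <-]; rewrite lee_fin.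
  rewrite [X in _ `^ X](_ : _ = 4%:R); last by ring.
  rewrite (powR_p d x0 lam lam01).
  rewrite ler_pdivrMr ?exprn_gt0 //; apply: le_trans (FF_abs x) _.
  have -> : 36 * A1 x0 lam xi C0 * I * `|t| * a * p x ^+ 4 =
    (36 * A1 x0 lam xi C0 * I * `|t| * p x ^+ 4) * a by ring.
  have -> : 36 * A1 x0 lam xi C0 * I * `|t| * (m + a) * p x ^+ 4 =
    (36 * A1 x0 lam xi C0 * I * `|t| * p x ^+ 4) * (m + a) by ring.
  apply: ler_wpM2l; last by rewrite lerDr.
  by rewrite !mulr_ge0 // ?exprn_ge0 // ltW.
Qed.

End Final.

Theorem lemma3p3 (R : realType) (E : pointedType) (d : E -> E -> R) (x0 : E)
  (dG : measure_display) (G : measurableType dG) (act : G -> E -> E)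
  (P : probability G R) (xi : E -> R) (lam : R) :
  is_metric d ->
  compact_closed_balls d ->
  ~ dcompact d setT ->
  (* G is a semigroup of Lipschitz maps of E acting measurably *)
  injective act ->
  (forall g h, exists k, act k = act g \o act h) ->
  (forall g, dlipschitz d (act g)) ->
  @measurable_fun _ _ (G * borelE d)%type (borelE d) setT
    (fun p => act p.1 p.2) ->
  (* condition star with n0 = 1 *)
  (integral P setT (fun g => ((Gam d act x0 g) ^+ 3
               * (1 + Num.sqrt (lipc d (act g))))%:E) < +oo)%E ->
  (integral P setT (fun g => (Num.sqrt (lipc d (act g))
               * (Num.max (lipc d (act g)) 1) ^+ 3)%:E) < 1%:E)%E ->
  (* xi is Lipschitz *)
  (exists C : R, forall x y, `|xi x - xi y| <= C * d x y) ->
  0 < lam <= 1 ->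
  exists K : R, 0 < K /\
    forall f : E -> R[i], inL d x0 lam 1 f ->
    forall t : R,
      (normL d x0 lam 3 (fun x : E => (Qt act P xi t f x - Qop act P f x)%R)
        <= (K * `|t|)%:E * normL d x0 lam 1 f)%E.
Proof.
move=> dm _ ncpt _ _ lip mact Hint1 _ [C HC] lam01.
have two : exists x1 x2 : E, x1 <> x2.
  case: (pselect (exists x1 x2 : E, x1 <> x2)) => // hn; exfalso.
  have all_eq y : y = x0.
    by apply: contrapT => hy; apply: hn; exists y, x0.
  apply: ncpt => I U _ cov.
  have [i _ Ui] := cov x0 Logic.I.
  exists [set i]; split; first exact: finite_set1.
  move=> y _; rewrite (all_eq y); exists i => //.
have HC' : forall x y, `|xi x - xi y| <= `|C| * d x y.
  move=> x y; apply: le_trans (HC x y) _; apply: ler_wpM2r.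
    exact: (d_ge0 d dm).
  exact: ler_norm.
have C00 : 0 <= `|C| := normr_ge0 C.
have HH0 g : 0 <= HH d x0 act g.
  by have [_ _ _ h] := Gp_bnd d x0 act dm two lip g; apply: le_trans h.
have Hint : (\int[P]_x (HH d x0 act x)%:E < +oo)%E := Hint1.
have Ifin : (\int[P]_x (HH d x0 act x)%:E)%E \is a fin_num.
  rewrite ge0_fin_numE // integral_ge0 // => x _.
  by rewrite lee_fin.
set I := fine (\int[P]_x (HH d x0 act x)%:E)%E.
have HI : (\int[P]_x (HH d x0 act x)%:E)%E = I%:E by rewrite fineK.
have I0 : 0 <= I := @I_ge0 _ _ _ P _ _ HH0 HI.
have A10 := A1_ge0 x0 lam lam01 xi `|C| C00.
have A20 := A2_ge0 x0 lam lam01 xi `|C| C00.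
set K0 := 54 * A2 x0 lam xi `|C| * I + 36 * A1 x0 lam xi `|C| * I.
have K00 : 0 <= K0 by rewrite /K0 addr_ge0 // !mulr_ge0.
exists (K0 + 1); split; first by rewrite ltr_wpDl.
move=> f fL t.
have [m [a [m0 a0 nE Hm Ha]]] := f_extract d x0 lam dm lam01 f two fL.
rewrite nE.
apply: le_trans (FF_norm d x0 act P xi lam `|C| I dm lam01 two lip mact C00 HC' HI
  f m a t m0 a0 Hm Ha) _.
rewrite -EFinM lee_fin; apply: ler_wpM2r; first exact: addr_ge0.
by apply: ler_wpM2r => //; rewrite lerDl.
Qed.
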